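(* Let $0<\theta\le 3/4$ and $f(x)=\log\frac{\cosh(x/2)+\theta\sinh(x/2)}{\cosh(x/2)-\theta\sinh(x/2)}$. Then $|f(x)-f(y)|\le 2f(|x-y|/2)$ for all $x,y\in\mathbb R$. Moreover, there exists a universal constant $\kappa>1/100$ (independent of $\theta$) such that for all constants $C_1,C_2\ge1$ with $C_2\ge1+(\tfrac12C_1-1)(1-\theta^2)$ and all $\delta>0$, $$f(\delta)\big(1+4\kappa(1-\theta)C_1\,\delta\tanh(\delta/2)\big)\le C_2\,\theta\,\delta.$$ *)

(* Defs.v *)
From Stdlib Require Import Reals.
Open Scope R_scope.

Definition ftheta (theta x : R) : R :=
  ln ((cosh (x / 2) + theta * sinh (x / 2)) / (cosh (x / 2) - theta * sinh (x / 2))).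

(* Main.v *)
Require Import Defs.
From Stdlib Require Import Reals Lra Psatz.
Open Scope R_scope.

Definition phi (s : R) := ln (1 + s) - ln (1 - s).

Lemma dl_eq f x l l' : derivable_pt_lim f x l -> l = l' -> derivable_pt_lim f x l'.
Proof. intros H ->; exact H. Qed.

Lemma d_plus f g x l1 l2 : derivable_pt_lim f x l1 -> derivable_pt_lim g x l2 ->
  derivable_pt_lim (fun y => f y + g y) x (l1 + l2).
Proof. intros; now apply derivable_pt_lim_plus. Qed.
Lemma d_minus f g x l1 l2 : derivable_pt_lim f x l1 -> derivable_pt_lim g x l2 ->
  derivable_pt_lim (fun y => f y - g y) x (l1 - l2).
Proof. intros; now apply derivable_pt_lim_minus. Qed.
Lemma d_div f g x l1 l2 : derivable_pt_lim f x l1 -> derivable_pt_lim g x l2 -> g x <> 0 ->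
  derivable_pt_lim (fun y => f y / g y) x ((l1 * g x - l2 * f x) / (g x)²).
Proof. intros; now apply derivable_pt_lim_div. Qed.
Lemma d_const a x : derivable_pt_lim (fun _ => a) x 0.
Proof. apply derivable_pt_lim_const. Qed.
Lemma d_mon c n x : derivable_pt_lim (fun y => c * y^n) x (c * (INR n * x^(pred n))).
Proof. apply (derivable_pt_lim_scal (fun y => y^n)). apply derivable_pt_lim_pow. Qed.
Lemma d_ln1 a b x : 0 < a + b*x -> derivable_pt_lim (fun y => ln (a + b*y)) x (b / (a + b*x)).
Proof. intros H.
  assert (H1 : derivable_pt_lim (fun y => a + b*y) x (0 + b*1)).
  { apply (derivable_pt_lim_plus (fct_cte a) (mult_real_fct b id)).
    apply derivable_pt_lim_const. apply derivable_pt_lim_scal, derivable_pt_lim_id. }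
  eapply dl_eq. apply (derivable_pt_lim_comp (fun y => a + b*y) ln x _ (/ (a + b*x)) H1).
  apply derivable_pt_lim_ln; exact H. field. lra.
Qed.

Lemma mono0 (g g' : R -> R) b : 0 < b ->
  (forall c, 0 <= c <= b -> derivable_pt_lim g c (g' c)) ->
  (forall c, 0 < c < b -> 0 <= g' c) -> g 0 <= g b.
Proof. intros Hb Hd Hp.
  destruct (MVT_cor2 g g' 0 b Hb Hd) as [c [Hc1 Hc2]].
  assert (0 <= g' c) by (apply Hp; lra). nra. Qed.

Lemma F1 s : 0 <= s < 1 -> 2*(s + s^3/3 + s^5/5 + s^7/7) <= phi s.
Proof. intros Hs. destruct (Req_dec s 0) as [->|Hs0].
  { unfold phi. replace (1+0) with 1 by ring. replace (1-0) with 1 by ring. rewrite ln_1. lra. }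
  assert (H := mono0 (fun y => ln (1 + 1*y) - ln (1 + -1*y) - (2*y^1 + 2/3*y^3 + 2/5*y^5 + 2/7*y^7))
     (fun c => 2*c^8/(1-c^2)) s ltac:(lra)).
  cbv beta in H.
  assert (H' : (fun y => ln (1 + 1*y) - ln (1 + -1*y) - (2*y^1 + 2/3*y^3 + 2/5*y^5 + 2/7*y^7)) 0
     <= (fun y => ln (1 + 1*y) - ln (1 + -1*y) - (2*y^1 + 2/3*y^3 + 2/5*y^5 + 2/7*y^7)) s).
  { apply H.
    - intros c Hc. eapply dl_eq.
      + apply d_minus. apply d_minus; apply d_ln1; lra.
        repeat apply d_plus; apply d_mon.
      + simpl. field. repeat split; intro; nra.
    - intros c Hc. apply Rmult_le_pos. assert (0 <= c^8) by (apply pow_le; lra). lra.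
      apply Rlt_le, Rinv_0_lt_compat. nra. }
  cbv beta in H'. unfold phi.
  replace (1 + 1*0) with 1 in H' by ring. replace (1 + -1*0) with 1 in H' by ring.
  replace (1 + 1*s) with (1+s) in H' by ring. replace (1 + -1*s) with (1-s) in H' by ring.
  rewrite ln_1 in H'. lra.
Qed.

Lemma F2 s : 0 <= s < 1 -> phi s <= 2*s + 2/3*s^3/(1-s^2).
Proof. intros Hs. destruct (Req_dec s 0) as [->|Hs0].
  { unfold phi. replace (1+0) with 1 by ring. replace (1-0) with 1 by ring. rewrite ln_1.
    replace (0^3) with 0 by ring. unfold Rdiv. lra. }
  assert (H := mono0 (fun y => 2*y^1 + (2/3*y^3)/(1 + -1*y^2) - (ln (1 + 1*y) - ln (1 + -1*y)))
     (fun c => 4/3*c^4/(1-c^2)^2) s ltac:(lra)).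
  assert (H' : (fun y => 2*y^1 + (2/3*y^3)/(1 + -1*y^2) - (ln (1 + 1*y) - ln (1 + -1*y))) 0
     <= (fun y => 2*y^1 + (2/3*y^3)/(1 + -1*y^2) - (ln (1 + 1*y) - ln (1 + -1*y))) s).
  { apply H.
    - intros c Hc. eapply dl_eq.
      + apply d_minus. apply d_plus. apply d_mon. apply d_div. apply d_mon.
        apply d_plus. apply d_const. apply d_mon. nra.
        apply d_minus; apply d_ln1; lra.
      + unfold Rsqr. simpl. field. repeat split; intro; nra.
    - intros c Hc. apply Rmult_le_pos. assert (0 <= c^4) by (apply pow_le; lra). lra.
      apply Rlt_le, Rinv_0_lt_compat. assert (0 < 1 - c^2) by nra. apply pow_lt; lra. }
  cbv beta in H'. unfold phi.
  replace (1 + 1*0) with 1 in H' by ring. replace (1 + -1*0) with 1 in H' by ring.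
  replace (1 + 1*s) with (1+s) in H' by ring. replace (1 + -1*s) with (1-s) in H' by ring.
  replace (1 + -1*s^2) with (1-s^2) in H' by ring.
  rewrite ln_1 in H'. replace ((2/3*0^3)/(1 + -1*0^2)) with 0 in H' by field.
  replace (s^1) with s in H' by ring. lra.
Qed.
Lemma polyE s P : 0 < s < 1 -> 0 <= P <= 9/16 ->
  let D := 1 - P*s in
  let l := 2*(1+s/3+s^2/5+s^3/7) in
  l*(3*D - (8/99)*(1-P)*s*(6-4*P*s)) - (6-4*P*s) >= 0.
Proof. intros Hs HP D l. unfold D, l.
 assert (H0: 34/33 + 434/495*s + 766/1155*s^2 - 32/231*s^3 >= 0) by nra.
 assert (H1: 34/33*(7/16) + (434/495 - 34/33*(9/16) - 64/99*(81/256))*s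
   + (766/1155 - 1174/1485*(9/16) - 64/297*(81/256))*s^2
   + (-32/231 - 2042/3465*(9/16) - 64/495*(81/256))*s^3
   + (64/693*(9/16) - 64/693*(81/256))*s^4 >= 0).
 { assert (s^3 <= s) by nra. assert (0 <= s^4) by nra. assert (0<= s^2) by nra. nra. }
 assert (HA: 0 <= P*(9/16-P)*(64/99*s + 64/297*s^2 + 64/495*s^3 + 64/693*s^4)).
 { apply Rmult_le_pos. nra. assert (0<=s^3) by nra. assert (0 <= s^4) by nra. nra. }
 assert (HE: 0 <= 34/33*(1-P) + s*(434/495 - 34/33*P - 64/99*P^2) + s^2*(766/1155 - 1174/1485*P - 64/297*P^2)
   + s^3*(-32/231 - 2042/3465*P - 64/495*P^2) + s^4*(64/693*P - 64/693*P^2)) by nra.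
 nra.
Qed.

Lemma core th t d a : 0 < th <= 3/4 -> 0 < t < 1 ->
  2*(t + t^3/3 + t^5/5 + t^7/7) <= d ->
  0 <= a <= 2*(th*t) + 2/3*(th*t)^3/(1-(th*t)^2) ->
  a * (1 + 8/99*(1-th)*d*t) <= th*d /\ a <= 3*th.
Proof. intros Hth Ht HL Ha.
  set (L := 2*(t + t^3/3 + t^5/5 + t^7/7)) in *.
  set (Q := 2*t + 2/3*th^2*t^3/(1-th^2*t^2)).
  assert (Htt : 0 < th*t < 3/4) by (split; nra). assert (HD : 0 < 1 - th^2*t^2) by nra.
  assert (HaQ : a <= th*Q).
  { replace (th*Q) with (2*(th*t) + 2/3*(th*t)^3/(1-(th*t)^2)). lra. unfold Q. field. nra. }
  assert (HQ3 : Q <= 3).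
  { unfold Q. assert (2/3*th^2*t^3/(1-th^2*t^2) <= 1).
    { apply Rmult_le_reg_r with (1-th^2*t^2). lra. unfold Rdiv. rewrite Rmult_assoc, Rinv_l by lra.
      assert (th^2 <= 9/16) by nra. assert (t^3 <= 1) by (apply pow_le1 ||  nra). nra. }
    lra. }
  assert (HQ0 : 0 <= Q).
  { unfold Q. assert (0 <= 2/3*th^2*t^3/(1-th^2*t^2)).
    { apply Rmult_le_pos. assert (0 <= t^3) by (apply pow_le; lra). nra. apply Rlt_le, Rinv_0_lt_compat; lra. }
    lra. }
  assert (HE := polyE (t^2) (th^2) ltac:(split; nra) ltac:(split; nra)).
  cbv zeta in HE.
  assert (Hkey : L*(1 - 8/99*(1-th^2)*t*Q) - Q >= 0).
  { assert (Hid : L*(1 - 8/99*(1-th^2)*t*Q) - Q =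
      t * ((2*(1+t^2/3+(t^2)^2/5+(t^2)^3/7))*(3*(1-th^2*t^2) - (8/99)*(1-th^2)*t^2*(6-4*th^2*t^2)) - (6-4*th^2*t^2))
       / (3*(1-th^2*t^2))).
    { unfold L, Q. field. lra. }
    rewrite Hid. apply Rle_ge. apply Rmult_le_pos. apply Rmult_le_pos. lra. lra.
    apply Rlt_le, Rinv_0_lt_compat; lra. }
  assert (HLpos : 0 <= L).
  { unfold L. assert (0 <= t^3) by (apply pow_le; lra). assert (0 <= t^5) by (apply pow_le; lra).
    assert (0 <= t^7) by (apply pow_le; lra). lra. }
  assert (Hk : 0 < 1 - 8/99*(1-th^2)*t*Q).
  { assert (0 <= (1-th^2)*t*Q) by (apply Rmult_le_pos; [apply Rmult_le_pos|]; nra). 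
    assert ((1-th^2)*t*Q <= 3) by (assert (0 <= 1-th^2 <= 1) by nra; nra). lra. }
  assert (HdQ : Q <= d*(1 - 8/99*(1-th^2)*t*Q)) by nra.
  split; [|nra].
  assert (Hd0 : 0 <= d) by lra.
  assert (HK : 8/99*(1-th)*d*t <= 8/99*(1-th^2)*d*t).
  { assert (0 <= d*t) by nra. assert (1-th <= 1-th^2) by nra. nra. }
  assert (a*(1 + 8/99*(1-th)*d*t) <= th*Q*(1 + 8/99*(1-th^2)*d*t)).
  { assert (0 <= 8/99*(1-th)*d*t) by (assert (0<=d*t) by nra; nra).
    apply Rmult_le_compat; lra. }
  nra.
Qed.

Lemma ln_div' a b : 0 < a -> 0 < b -> ln (a / b) = ln a - ln b.
Proof. intros. unfold Rdiv. rewrite ln_mult, ln_Rinv; try lra. apply Rinv_0_lt_compat; lra. Qed.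

Lemma ln_le' a b : 0 < a -> a <= b -> ln a <= ln b.
Proof. intros Ha [Hb| ->]. left; now apply ln_increasing. lra. Qed.

Lemma exp_half x : exp (x/2) * exp (x/2) = exp x.
Proof. rewrite <- exp_plus. f_equal. field. Qed.

Lemma ftheta_exp th x : 0 < th < 1 ->
  ftheta th x = ln (((1+th)*exp x + (1-th)) / ((1-th)*exp x + (1+th))).
Proof. intros Hth. unfold ftheta, cosh, sinh. rewrite exp_Ropp, <- (exp_half x).
  assert (He := exp_pos (x/2)). set (e := exp (x/2)) in *. f_equal.
  field. repeat split; intro; nra. Qed.

Lemma tanh_E d : tanh (d/2) = (exp d - 1)/(exp d + 1).
Proof. unfold tanh, cosh, sinh. rewrite exp_Ropp, <- (exp_half d).
  assert (He := exp_pos (d/2)). set (e := exp (d/2)) in *.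
  field. split. nra. lra. Qed.

Lemma tanh_range d : 0 < d -> 0 < tanh (d/2) < 1.
Proof. intros Hd. rewrite tanh_E.
  assert (He : 1 < exp d). { rewrite <- exp_0. apply exp_increasing. lra. }
  set (e := exp d) in *.
  split. apply Rdiv_lt_0_compat; nra.
  apply Rmult_lt_reg_r with (e+1). nra. unfold Rdiv. rewrite Rmult_assoc, Rinv_l by nra. nra.
Qed.

Lemma phi_tanh d : 0 < d -> phi (tanh (d/2)) = d.
Proof. intros Hd. pose proof (tanh_range d Hd) as Ht. unfold phi.
  rewrite <- ln_div' by lra.
  replace ((1 + tanh (d/2)) / (1 - tanh (d/2))) with (exp d). apply ln_exp.
  rewrite tanh_E. assert (He := exp_pos d). field. lra.
Qed.

Lemma ftheta_phi th d : 0 < th < 1 -> 0 < d -> ftheta th d = phi (th * tanh (d/2)).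
Proof. intros Hth Hd. pose proof (tanh_range d Hd) as Ht. unfold phi.
  rewrite <- ln_div' by nra. unfold ftheta. f_equal.
  assert (Hc : 0 < cosh (d/2)) by (unfold cosh; pose proof (exp_pos (d/2)); pose proof (exp_pos (-(d/2))); lra).
  assert (Hs : 0 < sinh (d/2) < cosh (d/2)).
  { unfold tanh in Ht. destruct Ht as [Ht1 Ht2]. split.
    - apply Rmult_lt_reg_r with (/ cosh (d/2)). apply Rinv_0_lt_compat; lra. lra.
    - apply Rmult_lt_reg_r with (/ cosh (d/2)). apply Rinv_0_lt_compat; lra. rewrite Rinv_r by lra. exact Ht2. }
  unfold tanh. field. repeat split; intro; nra.
Qed.

Lemma part1_half th x y : 0 < th <= 3/4 ->
  ftheta th x - ftheta th y <= 2 * ftheta th (Rabs (x - y) / 2).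
Proof. intros Hth. rewrite !ftheta_exp by lra.
  set (N := fun q => (1+th)*q + (1-th)). set (M := fun q => (1-th)*q + (1+th)).
  change ((1+th)*exp x + (1-th)) with (N (exp x)). change ((1-th)*exp x + (1+th)) with (M (exp x)).
  change ((1+th)*exp y + (1-th)) with (N (exp y)). change ((1-th)*exp y + (1+th)) with (M (exp y)).
  change ((1+th)*exp (Rabs (x-y)/2) + (1-th)) with (N (exp (Rabs (x-y)/2))).
  change ((1-th)*exp (Rabs (x-y)/2) + (1+th)) with (M (exp (Rabs (x-y)/2))).
  assert (Hm1 : 1 <= exp (Rabs (x-y)/2)).
  { rewrite <- exp_0. destruct (Req_dec (Rabs (x-y)) 0) as [H0|H0].
    rewrite H0. replace (0/2) with 0 by field. lra. left. apply exp_increasing.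
    pose proof (Rabs_pos (x-y)). lra. }
  assert (Hmm := exp_half (Rabs (x-y))).
  set (m := exp (Rabs (x-y)/2)) in *. set (q := exp x). set (p := exp y).
  assert (Hq : 0 < q) by apply exp_pos. assert (Hp : 0 < p) by apply exp_pos.
  assert (HN : forall z, 0 < z -> 0 < N z) by (intros; unfold N; nra).
  assert (HM : forall z, 0 < z -> 0 < M z) by (intros; unfold M; nra).
  assert (Nq := HN q Hq). assert (Np := HN p Hp). assert (Nm := HN m ltac:(lra)).
  assert (Mq := HM q Hq). assert (Mp := HM p Hp). assert (Mm := HM m ltac:(lra)).
  rewrite <- ln_div' by (apply Rdiv_lt_0_compat; lra).
  replace (2 * ln (N m / M m)) with (ln (N m / M m * (N m / M m)))
    by (rewrite ln_mult by (apply Rdiv_lt_0_compat; lra); ring).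
  apply ln_le'. apply Rdiv_lt_0_compat; apply Rdiv_lt_0_compat; lra.
  replace (N q / M q / (N p / M p)) with ((N q * M p * (M m * M m)) / (M q * N p * (M m * M m)))
    by (field; repeat split; lra).
  replace (N m / M m * (N m / M m)) with ((N m * N m * M q * N p) / (M q * N p * (M m * M m)))
    by (field; repeat split; lra).
  apply Rmult_le_compat_r. apply Rlt_le, Rinv_0_lt_compat. repeat apply Rmult_lt_0_compat; lra.
  destruct (Rle_or_lt y x) as [Hxy|Hxy].
  - rewrite Rabs_right in Hmm by lra.
    assert (Hqp : q = p * (m*m)) by (unfold q, p; rewrite Hmm, <- exp_plus; f_equal; ring).
    assert (Hid : N m * N m * M q * N p - N q * M p * (M m * M m) = 4*th*(1-th^2)*(m*m-1)*(m*p-1)^2)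
      by (unfold N, M; rewrite Hqp; ring).
    assert (0 <= 4*th*(1-th^2)*(m*m-1)*(m*p-1)^2).
    { apply Rmult_le_pos. apply Rmult_le_pos. apply Rmult_le_pos. lra. nra. clear -Hm1; nra. apply pow2_ge_0. }
    lra.
  - rewrite Rabs_left in Hmm by lra.
    assert (Hqp : p = q * (m*m)) by (unfold q, p; rewrite Hmm, <- exp_plus; f_equal; ring).
    assert (H1 : N q * M p <= M q * N p).
    { assert (M q * N p - N q * M p = 4*th*(p-q)) by (unfold N, M; ring). assert (q <= p) by (rewrite Hqp; clear -Hm1 Hq; assert (1 <= m*m) by nra; nra). assert (0 <= th*(p-q)) by (apply Rmult_le_pos; lra). lra. }
    assert (H2 : M m <= N m) by (unfold N, M; nra).
    assert (H3 : M m * M m <= N m * N m) by nra.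
    assert (0 <= N q * M p) by nra.
    assert (N q * M p * (M m * M m) <= M q * N p * (N m * N m)).
    { apply Rmult_le_compat; nra. }
    nra.
Qed.

Theorem mainTheorem11 :
  (forall theta : R, 0 < theta <= 3 / 4 ->
     forall x y : R,
       Rabs (ftheta theta x - ftheta theta y) <= 2 * ftheta theta (Rabs (x - y) / 2))
  /\
  (exists kappa : R, kappa > 1 / 100 /\
     forall theta : R, 0 < theta <= 3 / 4 ->
     forall C1 C2 : R, 1 <= C1 -> 1 <= C2 ->
       C2 >= 1 + (C1 / 2 - 1) * (1 - theta ^ 2) ->
     forall delta : R, 0 < delta ->
       ftheta theta delta * (1 + 4 * kappa * (1 - theta) * C1 * delta * tanh (delta / 2))
         <= C2 * theta * delta).
Proof. split.
- intros th Hth x y. apply Rabs_le. split.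
  + pose proof (part1_half th y x Hth) as H. rewrite Rabs_minus_sym in H. lra.
  + apply part1_half; exact Hth.
- exists (1/99). split. lra.
  intros th Hth C1 C2 HC1 HC2 HC d Hd.
  pose proof (tanh_range d Hd) as Ht. pose proof (phi_tanh d Hd) as Hphi.
  rewrite (ftheta_phi th d) by lra.
  set (t := tanh (d/2)) in *. set (a := phi (th*t)).
  assert (HL := F1 t ltac:(lra)). rewrite Hphi in HL.
  assert (Htt : 0 < th*t < 1) by (split; nra).
  assert (Ha0 := F1 (th*t) ltac:(lra)).
  assert (Ha1 := F2 (th*t) ltac:(lra)). fold a in Ha0, Ha1.
  assert (Ha0' : 0 <= a).
  { assert (0 <= (th*t)^3) by (apply pow_le; lra). assert (0 <= (th*t)^5) by (apply pow_le; lra).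
    assert (0 <= (th*t)^7) by (apply pow_le; lra). lra. }
  destruct (core th t d a Hth ltac:(lra) HL ltac:(lra)) as [Hc Ha3].
  assert (Hdt : 0 <= d*t) by nra.
  assert (Hth1 : 0 <= 1 - th) by lra.
  destruct (Rle_or_lt C1 2) as [HC12|HC12].
  + assert (a * (1 + 4 * (1/99) * (1 - th) * C1 * d * t) <= a * (1 + 8/99*(1-th)*d*t)).
    { apply Rmult_le_compat_l. lra.
      assert (0 <= (1-th)*d*t) by (apply Rmult_le_pos; [apply Rmult_le_pos|]; lra). nra. }
    assert (th*d <= C2*th*d) by (assert (0 <= th*d) by nra; nra). lra.
  + assert (Hsplit : a * (1 + 4 * (1/99) * (1 - th) * C1 * d * t) =
       a * (1 + 8/99*(1-th)*d*t) + a * (4/99*(1-th)*(C1-2)*d*t)) by (unfold a, t; field).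
    assert (Hx : a * (4/99*(1-th)*(C1-2)*d*t) <= th*d*((C1/2-1)*(1-th^2))).
    { assert (H0 : 0 <= (1-th)*(C1-2)*d) by (apply Rmult_le_pos; [apply Rmult_le_pos|]; lra).
      assert (a*t <= 3*th) by nra.
      assert (a * (4/99*(1-th)*(C1-2)*d*t) = (4/99)*(a*t)*((1-th)*(C1-2)*d)) by ring.
      assert ((4/99)*(a*t)*((1-th)*(C1-2)*d) <= (4/99)*(3*th)*((1-th)*(C1-2)*d)).
      { apply Rmult_le_compat_r. lra. assert (0 <= a*t) by nra. lra. }
      assert (th*d*((C1/2-1)*(1-th^2)) = (th*(1+th)/2)*((1-th)*(C1-2)*d)) by field.
      assert ((4/99)*(3*th) <= th*(1+th)/2) by nra.
      assert ((4/99)*(3*th)*((1-th)*(C1-2)*d) <= (th*(1+th)/2)*((1-th)*(C1-2)*d)).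
      { apply Rmult_le_compat_r; lra. }
      lra. }
    assert (th*d*(1 + (C1/2-1)*(1-th^2)) <= C2*th*d).
    { assert (0 <= th*d) by nra. replace (C2*th*d) with (th*d*C2) by ring. apply Rmult_le_compat_l; lra. }
    nra.
Qed.
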